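(* Let $P$ be a pattern and let $\mathcal{O}$ be the list of schedules output by the schedule generation procedure described in the context (with any fixed iteration orders). Then (i) no two distinct schedules in $\mathcal{O}$ are equivalent, and (ii) every schedule for $P$ is equivalent to some schedule in $\mathcal{O}$. That is, $\mathcal{O}$ contains exactly one representative of each equivalence class of schedules for $P$.
   Context: A pattern $P$ is a finite simple connected graph on $n$ labeled vertices; $\mathrm{Aut}(P)$ is its automorphism group (bijections $V(P)\to V(P)$ preserving adjacency and non-adjacency). A schedule for $P$ is a sequence $S=(S[0],\dots,S[n-1])$ listing every vertex of $P$ exactly once such that each $S[k]$ with $k\ge 1$ is adjacent in $P$ to some $S[j]$ with $j<k$. Two schedules $S,S'$ are equivalent if there is $\phi\in\mathrm{Aut}(P)$ with $\phi(S[i])=S'[i]$ for all $i$. Schedule generation procedure: call $\mathrm{Gen}((),\mathrm{Aut}(P))$, where $\mathrm{Gen}(s,A)$, for a partial sequence $s$ of distinct vertices and a set $A$ of automorphisms (in each call $A$ is exactly the set of automorphisms fixing every vertex of $s$), does the following. If $s$ contains all vertices of $P$, output $s$ and return. Otherwise let $C=V(P)$ if $s$ is empty, and otherwise let $C$ be the set of vertices not in $s$ that are adjacent to at least one vertex of $s$. Initialize a set $\mathrm{processed}=\emptyset$ (local to this call) and iterate over $v\in C$ in some fixed order: if $v\in\mathrm{processed}$, skip $v$; otherwise, for every $x\in A$ with $x(v)\neq v$ add $x(v)$ to $\mathrm{processed}$, and call $\mathrm{Gen}(s+(v),\{x\in A : x(v)=v\})$. *)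

(* Defs.v *)
From mathcomp Require Import all_boot all_fingroup.
Set Implicit Arguments. Unset Strict Implicit. Unset Printing Implicit Defensive.

(* A pattern: vertex type T (finite, labeled), adjacency relation e. *)
Definition simple_graph (T : finType) (e : rel T) : Prop :=
  symmetric e /\ irreflexive e.

Definition connected_graph (T : finType) (e : rel T) : Prop :=
  forall x y : T, connect e x y.

Definition Aut (T : finType) (e : rel T) : {set {perm T}} :=
  [set p : {perm T} | [forall x, forall y, e (p x) (p y) == e x y]].

Definition is_schedule (T : finType) (e : rel T) (S : seq T) : Prop :=
  [/\ uniq S, (forall v : T, v \in S) &
      (forall (s1 : seq T) (v : T) (s2 : seq T),
          S = s1 ++ v :: s2 -> s1 != [::] -> has (fun u => e u v) s1)].

Definition sched_equiv (T : finType) (e : rel T) (S S' : seq T) : Prop :=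
  exists2 phi : {perm T}, phi \in Aut e & map phi S = S'.

Definition candset (T : finType) (e : rel T) (s : seq T) : {set T} :=
  if s is [::] then [set: T]
  else [set v | (v \notin s) && has (fun u => e u v) s].

(* Gen(s, A), with a fuel argument bounding recursion depth (each call adds
   one vertex to s, so fuel #|T|.+1 suffices).  ord s is the fixed iteration
   order used in the call with partial sequence s. *)
Fixpoint gen (T : finType) (e : rel T) (ord : seq T -> seq T) (fuel : nat)
    (s : seq T) (A : {set {perm T}}) : seq (seq T) :=
  match fuel with
  | 0 => [::]
  | n.+1 =>
    if [forall v, v \in s] then [:: s]
    else
      let step (acc : {set T} * seq (seq T)) (v : T) :=
        if v \in acc.1 then acc
        else (acc.1 :|: (fun x : {perm T} => x v) @: [set x in A | x v != v],
              acc.2 ++ gen e ord n (rcons s v) [set x in A | x v == v]) in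
      (foldl step (set0, [::]) (ord s)).2
  end.

Definition schedules_output (T : finType) (e : rel T)
    (ord : seq T -> seq T) : seq (seq T) :=
  gen e ord #|T|.+1 [::] (Aut e).

(* Main.v *)
Require Import Defs.
From mathcomp Require Import all_boot all_fingroup.
Set Implicit Arguments. Unset Strict Implicit. Unset Printing Implicit Defensive.
Local Notation Aut := Defs.Aut.
Local Open Scope group_scope.

Lemma AutP (T : finType) (e : rel T) (x : {perm T}) :
  reflect (forall a b, e (x a) (x b) = e a b) (x \in Aut e).
Proof.
rewrite inE; apply: (iffP forallP) => [H a b | H a].
  by apply/eqP; move/forallP: (H a); apply.
by apply/forallP => b; rewrite H.
Qed.

Lemma Aut1 (T : finType) (e : rel T) : (1 : {perm T}) \in Aut e.
Proof. by apply/AutP => a b; rewrite !perm1. Qed.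

Lemma AutV (T : finType) (e : rel T) (x : {perm T}) : x \in Aut e -> x^-1 \in Aut e.
Proof. move/AutP=> H; apply/AutP => a b; by rewrite -H !permKV. Qed.

Lemma AutM (T : finType) (e : rel T) (x y : {perm T}) :
  x \in Aut e -> y \in Aut e -> x * y \in Aut e.
Proof. move/AutP=> Hx /AutP Hy; apply/AutP => a b; by rewrite !permM Hy Hx. Qed.

Lemma equiv_trans (T : finType) (e : rel T) (S1 S2 S3 : seq T) :
  sched_equiv e S1 S2 -> sched_equiv e S2 S3 -> sched_equiv e S1 S3.
Proof.
case=> x Hx <- [y Hy <-]; exists (x * y); first exact: AutM.
by rewrite -map_comp; apply: eq_map => a; rewrite permM.
Qed.

Lemma map1 (T : finType) (s : seq T) : map (1 : {perm T}) s = s.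
Proof. by elim: s => //= a s ->; rewrite perm1. Qed.

Lemma sched_map (T : finType) (e : rel T) (x : {perm T}) S :
  x \in Aut e -> is_schedule e S -> is_schedule e (map x S).
Proof.
move=> /AutP Hx [Hu Hc Ha]; split.
- by rewrite map_inj_uniq //; exact: perm_inj.
- by move=> v; rewrite -(permKV x v) mem_map ?Hc //; exact: perm_inj.
- move=> s1 v s2 E Hne.
  have E' : S = map x^-1 s1 ++ x^-1 v :: map x^-1 s2.
    by rewrite -[S](mapK (permK x)) E map_cat.
  have Hne' : map x^-1 s1 != [::] by case: (s1) Hne.
  move: (Ha _ _ _ E' Hne'); rewrite has_map => /hasP [u Hu' /= Heu].
  by apply/hasP; exists u => //; rewrite -(permKV x u) -(permKV x v) Hx.
Qed.

Definition Stab (T : finType) (e : rel T) (s : seq T) : {set {perm T}} :=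
  [set x in Aut e | all (fun u => x u == u) s].
Lemma StabE (T : finType) (e : rel T) s (x : {perm T}) :
  (x \in Stab e s) = (x \in Aut e) && all (fun u => x u == u) s.
Proof. by rewrite /Stab in_set. Qed.

Definition Orb (T : finType) (A : {set {perm T}}) (v : T) : {set T} :=
  (fun x : {perm T} => x v) @: [set x in A | x v != v].
Fixpoint chosen (T : finType) (A : {set {perm T}}) (P : {set T}) (l : seq T)
  : seq T :=
  if l is v :: l' then
    if v \in P then chosen A P l' else v :: chosen A (P :|: Orb A v) l'
  else [::].

Lemma foldE (T : finType) (A : {set {perm T}}) (g : T -> seq (seq T)) l P L :
  (foldl (fun (acc : {set T} * seq (seq T)) (v : T) =>
      if v \in acc.1 then acc
      else (acc.1 :|: (fun x : {perm T} => x v) @: [set x in A | x v != v],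
            acc.2 ++ g v)) (P, L) l).2
  = L ++ flatten (map g (chosen A P l)).
Proof.
elim: l P L => [|v l IH] P L /=; first by rewrite cats0.
by case: (v \in P); rewrite IH //= catA.
Qed.

Lemma Orb_neq (T : finType) (A : {set {perm T}}) v w : w \in Orb A v -> w != v.
Proof. by case/imsetP => x; rewrite inE => /andP[_ H] ->. Qed.

Lemma chosen_sub (T : finType) A P (l : seq T) v : v \in chosen A P l -> v \in l.
Proof.
elim: l P => [|a l IH] P //=.
rewrite in_cons; case: (a \in P) => [/IH ->|]; first by rewrite orbT.
by rewrite in_cons => /orP[->//|/IH ->]; rewrite orbT.
Qed.

Lemma chosen_notin (T : finType) A P (l : seq T) v : v \in chosen A P l -> v \notin P.
Proof.
elim: l P => [|a l IH] P //=.
case H: (a \in P); first exact: IH.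
rewrite in_cons => /orP[/eqP->|/IH]; first by rewrite H.
by rewrite in_setU negb_or => /andP[].
Qed.

Lemma chosen_uniq (T : finType) A P (l : seq T) : uniq l -> uniq (chosen A P l).
Proof.
elim: l P => [|a l IH] P //= /andP[Hn Hu].
case: (a \in P); rewrite /= IH // andbT.
by apply: contra Hn; exact: chosen_sub.
Qed.

Lemma chosen_sep (T : finType) (A : {set {perm T}}) P (l : seq T)
  (Hsym : forall v w, w \in Orb A v -> v \in Orb A w) v w :
  v \in chosen A P l -> w \in chosen A P l -> w \in Orb A v -> False.
Proof.
elim: l P => [|a l IH] P //=.
case: (a \in P); first exact: IH.
rewrite !in_cons => /orP[/eqP->|Hv] /orP[/eqP->|Hw] Ho.
- by have := Orb_neq Ho; rewrite eqxx.
- by have := chosen_notin Hw; rewrite in_setU Ho orbT.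
- by have := chosen_notin Hv; rewrite in_setU (Hsym _ _ Ho) orbT.
- exact: IH Hv Hw Ho.
Qed.

Lemma chosen_cover (T : finType) (A : {set {perm T}}) (P : {set T}) (l : seq T) u :
  u \in l -> u \in P \/ u \in chosen A P l \/
             exists2 v, v \in chosen A P l & u \in Orb A v.
Proof.
elim: l P => [|a l IH] P //=.
rewrite in_cons => /orP[/eqP->|Hu].
  by case H: (a \in P); [left | right; left; rewrite in_cons eqxx].
case H: (a \in P); first exact: IH.
case: (IH (P :|: Orb A a) Hu) => [|[Hc|[v Hv Ho]]].
- rewrite in_setU => /orP[Hp|Ho]; first by left.
  by right; right; exists a => //; rewrite in_cons eqxx.
- by right; left; rewrite in_cons Hc orbT.
- by right; right; exists v => //; rewrite in_cons Hv orbT.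
Qed.

Lemma StabV (T : finType) (e : rel T) s (x : {perm T}) :
  x \in Stab e s -> x^-1 \in Stab e s.
Proof.
rewrite !StabE => /andP[Ha Hs]; rewrite AutV //=; apply/allP => u Hu.
have /eqP H := allP Hs u Hu.
by rewrite -{1}H permK.
Qed.

Lemma Stab_sym (T : finType) (e : rel T) s v w :
  w \in Orb (Stab e s) v -> v \in Orb (Stab e s) w.
Proof.
case/imsetP => x; rewrite inE => /andP[Hx Hn] ->.
apply/imsetP; exists x^-1; last by rewrite permK.
by rewrite in_set StabV //= permK eq_sym.
Qed.

Lemma Stab_rcons (T : finType) (e : rel T) s v :
  [set x in Stab e s | x v == v] = Stab e (rcons s v).
Proof.
apply/setP => x; rewrite in_set !StabE all_rcons.
by case: (x \in Aut e); case: (x v == v); case: (all _ s).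
Qed.

Lemma Stab_fix (T : finType) (e : rel T) s (x : {perm T}) :
  x \in Stab e s -> map x s = s.
Proof.
rewrite StabE => /andP[_]; elim: s => //= a s IH /andP[/eqP -> /IH ->] //.
Qed.

Lemma Stab_of (T : finType) (e : rel T) s (x : {perm T}) :
  x \in Aut e -> map x s = s -> x \in Stab e s.
Proof.
move=> Hx Hs; rewrite StabE Hx /=; elim: s Hs => //= a s IH [-> /IH ->].
by rewrite eqxx.
Qed.

Lemma map_pref (T : finType) (x : {perm T}) s v t w t' :
  map x (s ++ v :: t) = s ++ w :: t' -> map x s = s /\ x v = w.
Proof.
rewrite map_cat /= => /eqP; rewrite eqseq_cat ?size_map //.
by case/andP => /eqP -> /eqP [-> _].
Qed.

Definition prefix_ok (T : finType) (e : rel T) (s : seq T) :=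
  uniq s /\ (forall s1 v s2, s = s1 ++ v :: s2 -> s1 != [::] ->
                            has (fun u => e u v) s1).

Lemma pref_rcons (T : finType) (e : rel T) s v :
  prefix_ok e s -> v \in candset e s -> prefix_ok e (rcons s v).
Proof.
case=> Hu Ha Hv.
have [Hn Hadj] : v \notin s /\ (s != [::] -> has (fun u => e u v) s).
  move: Hv; case: (s) => [|a s'] /=; rewrite ?inE //.
  by case/andP=> -> ->.
split; first by rewrite rcons_uniq Hn Hu.
move=> s1 v' s2; case/lastP: s2 => [|s2' w] E.
  move: E; rewrite cats1 => /rcons_inj [<- <-]; exact: Hadj.
move: E; rewrite -cat_rcons -rcons_cat => /rcons_inj [E _].
by apply: Ha; rewrite E cat_rcons.
Qed.

Lemma flatten_uniq_pref (T : finType) (s : seq T) (g : T -> seq (seq T)) c :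
  uniq c -> (forall v, v \in c -> uniq (g v)) ->
  (forall v S, v \in c -> S \in g v -> exists t, S = rcons s v ++ t) ->
  uniq (flatten (map g c)).
Proof.
elim: c => [|v c IH] //= /andP[Hv Hc] Hu Hp.
rewrite cat_uniq Hu ?mem_head //=; apply/andP; split.
  apply/hasPn => S /flattenP [Ls /mapP [w Hw ->] HS']; apply/negP => HS.
  have [t Et] := Hp v S (mem_head _ _) HS.
  have Hw' : w \in v :: c by rewrite in_cons Hw orbT.
  have [t' Et'] := Hp w S Hw' HS'.
  move: Et'; rewrite Et !cat_rcons => /eqP; rewrite eqseq_cat //.
  case/andP => _ /eqP [Evw _].
  by rewrite Evw Hw in Hv.
apply: IH => // [w Hw | w S Hw]; [apply: Hu | apply: Hp];
  by rewrite in_cons Hw orbT.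
Qed.

Definition spec (T : finType) (e : rel T) (s : seq T) (L : seq (seq T)) : Prop :=
  [/\ forall S, S \in L -> is_schedule e S /\ exists t, S = s ++ t,
      uniq L,
      forall S S', S \in L -> S' \in L -> sched_equiv e S S' -> S = S'
    & forall S t, is_schedule e S -> S = s ++ t ->
        exists2 S', S' \in L & sched_equiv e S S'].

Lemma main (T : finType) (e : rel T) (ord : seq T -> seq T)
  (Hord : forall s : seq T, perm_eq (ord s) (enum (candset e s))) n :
  forall s, prefix_ok e s -> #|T| < size s + n ->
  spec e s (gen e ord n s (Stab e s)).
Proof.
elim: n => [|m IH] s [Hu Ha] Hn.
  move/card_uniqP: Hu => Hs; by rewrite addn0 -Hs ltnNge max_card in Hn.
rewrite /=; case: ifP => Hfull.
  have Hsch : is_schedule e s by split => // v; exact: (forallP Hfull v).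
  split.
  - move=> S; rewrite inE => /eqP ->; split => //; by exists [::]; rewrite cats0.
  - done.
  - by move=> S S'; rewrite !inE => /eqP-> /eqP->.
  - move=> S t [HuS _ _] E.
    have Ht : t = [::].
      case: t E => [//|a t] E; move: HuS; rewrite E cat_uniq => /and3P[_ /hasPn H _].
      by have := H a (mem_head _ _); rewrite /= (forallP Hfull a).
    exists s; first by rewrite inE.
    by rewrite E Ht cats0; exists 1; [exact: Aut1 | exact: map1].
rewrite foldE cat0s.
set g := fun v => gen e ord m (rcons s v) [set x in Stab e s | x v == v].
set c := chosen (Stab e s) set0 (ord s).
have Hcand v : v \in ord s -> v \in candset e s by rewrite (perm_mem (Hord s)) mem_enum.
have IHv v : v \in c -> spec e (rcons s v) (g v).
  move=> Hv; rewrite /g Stab_rcons; apply: IH.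
    by apply: pref_rcons => //; apply: Hcand; exact: chosen_sub Hv.
  by rewrite size_rcons addSnnS.
have Hmem S v : v \in c -> S \in g v -> S \in flatten (map g c).
  by move=> Hv HS; apply/flattenP; exists (g v) => //; exact: map_f.
split.
- move=> S /flattenP [Ls /mapP [v Hv ->] HS].
  case: (IHv v Hv) => Ha' _ _ _; case: (Ha' S HS) => Hs [t Et].
  by split; [exact: Hs | exists (v :: t); rewrite Et cat_rcons].
- apply: (@flatten_uniq_pref _ s).
  + apply: chosen_uniq; rewrite (perm_uniq (Hord s)); exact: enum_uniq.
  + by move=> v Hv; case: (IHv v Hv).
  + by move=> v S Hv HS; case: (IHv v Hv) => Ha' _ _ _; case: (Ha' S HS).
- move=> S S' /flattenP [Ls /mapP [v Hv ->] HS] /flattenP [Ls' /mapP [w Hw ->] HS'].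
  move=> Heq; case: (eqVneq v w) => [Evw|Hne].
    subst w; by case: (IHv v Hv) => _ _ Hb _; apply: Hb.
  exfalso.
  case: (IHv v Hv) => Ha' _ _ _; case: (Ha' S HS) => _ [t Et].
  case: (IHv w Hw) => Hb' _ _ _; case: (Hb' S' HS') => _ [t' Et'].
  case: Heq => phi Hphi Em.
  move: Em; rewrite Et Et' !cat_rcons => /map_pref [Hs Hpv].
  apply: (@chosen_sep _ (Stab e s) set0 (ord s) (@Stab_sym _ e s) v w Hv Hw).
  apply/imsetP; exists phi => //; rewrite in_set Stab_of //= Hpv.
  by rewrite eq_sym.
- move=> S t HS E.
  move/negbT/forallPn: Hfull => [x Hx].
  have : x \in t.
    case: HS => _ Hc _; move: (Hc x); rewrite E mem_cat => /orP[H|//].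
    by rewrite H in Hx.
  case: t E => [//|u t'] E _.
  have Hnot : u \notin s.
    case: HS => HuS _ _; move: HuS; rewrite E cat_uniq => /and3P[_ /hasPn H _].
    exact: H u (mem_head _ _).
  have Hadj : s != [::] -> has (fun a => e a u) s.
    by move=> Hne; case: HS => _ _ Hs; exact: Hs _ _ _ E Hne.
  have Hc : u \in candset e s.
    by move: Hnot Hadj; case: (s) => [|a s'] H1 H2; rewrite /candset inE // H1 H2.
  have Hou : u \in ord s by rewrite (perm_mem (Hord s)) mem_enum.
  case: (chosen_cover (Stab e s) set0 Hou) => [|[Hcu|[v Hv Ho]]].
  + by rewrite inE.
  + case: (IHv u Hcu) => _ _ _ Hd.
    case: (Hd S t' HS); first by rewrite E cat_rcons.
    move=> S' HS' Heq; exists S' => //; exact: Hmem HS'.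
  + case/imsetP: Ho => y; rewrite inE => /andP[Hy _] Eu.
    have Hyi := StabV Hy.
    have HyA : y^-1 \in Aut e by move: Hyi; rewrite StabE => /andP[].
    have Hsch2 := sched_map HyA HS.
    have E2 : map y^-1 S = rcons s v ++ map y^-1 t'.
      by rewrite E map_cat (Stab_fix Hyi) /= Eu permK cat_rcons.
    case: (IHv v Hv) => _ _ _ Hd.
    case: (Hd _ _ Hsch2 E2) => S' HS' Heq.
    exists S'; first exact: Hmem HS'.
    apply: equiv_trans Heq; by exists y^-1.
Qed.

Theorem theorem3 (T : finType) (e : rel T)
    (Hsimple : simple_graph e) (Hconn : connected_graph e)
    (ord : seq T -> seq T)
    (Hord : forall s : seq T, perm_eq (ord s) (enum (candset e s))) :
  let O := schedules_output e ord in
  [/\ (forall S, S \in O -> is_schedule e S),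
      (forall i j, i < size O -> j < size O ->
         sched_equiv e (nth [::] O i) (nth [::] O j) -> i = j)
    & (forall S, is_schedule e S -> exists2 S', S' \in O & sched_equiv e S S')].
Proof.
move=> O.
have HS : Stab e [::] = Aut e by apply/setP => x; rewrite StabE andbT.
have Hp : prefix_ok e ([::] : seq T) by split => // s1 v s2; case: s1.
have Hn : #|T| < size ([::] : seq T) + #|T|.+1 by rewrite add0n.
have := @main T e ord Hord #|T|.+1 [::] Hp Hn.
rewrite HS /O /schedules_output => -[Ha Hu Hb Hc]; split.
- by move=> S /Ha [].
- move=> i j Hi Hj Heq; apply/eqP; rewrite -(nth_uniq [::] Hi Hj Hu); apply/eqP.
  by apply: Hb => //; exact: mem_nth.
- by move=> S HS'; exact: (Hc S S HS' erefl).
Qed.
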